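(* Let $n,g,k$ be integers with $1\leq g\leq \left\lfloor \frac{n-k-2}{2}\right\rfloor$ and $1\leq k\leq n-2g-2$. Let $s(n,k)=\min\{|E(G)| : G\in\mathscr{G}(n,k)\}$, where $\mathscr{G}(n,k)$ is the set of all connected graphs of order $n$ with $g$-good-neighbor connectivity $\kappa^g(G)=k$. Then: (1) if $g=1$, then $s(n,k)=n-1$; (2) if $n-k$ is even and $g\geq 2$, then $s(n,k)=\frac{(n-k)g}{2}+k+1$; (3) if $n-k$ is odd and $g\geq 2$, then $s(n,k)=\frac{(n-k)g+1}{2}+k+1$.
   Context: For a connected graph $G=(V,E)$ and integer $g\ge0$: a set $F\subseteq V$ is a $g$-good-neighbor faulty set if $|N(v)\cap (V-F)|\geq g$ for every $v\in V-F$; a $g$-good-neighbor cut is such an $F$ with $G-F$ disconnected; $\kappa^g(G)$ is the minimum cardinality of a $g$-good-neighbor cut (defined only when such a cut exists). *)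

(* Defs.v *)
From mathcomp Require Import all_boot.
Set Implicit Arguments. Unset Strict Implicit. Unset Printing Implicit Defensive.

Definition simple_graph (T : finType) (e : rel T) : Prop :=
  symmetric e /\ irreflexive e.

Definition nedges (n : nat) (e : rel 'I_n) : nat :=
  #|[set p : 'I_n * 'I_n | (p.1 < p.2)%N && e p.1 p.2]|.

Definition del_rel (T : finType) (e : rel T) (F : {set T}) : rel T :=
  [rel x y | [&& x \notin F, y \notin F & e x y]].

Definition gconnected (T : finType) (e : rel T) : Prop :=
  forall x y : T, connect e x y.

Definition del_connected (T : finType) (e : rel T) (F : {set T}) : Prop :=
  forall x y : T, x \notin F -> y \notin F -> connect (del_rel e F) x y.

Definition good_neighbor_faulty (T : finType) (e : rel T) (g : nat)
  (F : {set T}) : Prop :=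
  forall v : T, v \notin F -> (g <= #|[set u | e v u & u \notin F]|)%N.

Definition good_neighbor_cut (T : finType) (e : rel T) (g : nat)
  (F : {set T}) : Prop :=
  good_neighbor_faulty e g F /\ ~ del_connected e F.

Definition gn_connectivity_eq (T : finType) (e : rel T) (g k : nat) : Prop :=
  (exists F : {set T}, good_neighbor_cut e g F /\ #|F| = k) /\
  (forall F : {set T}, good_neighbor_cut e g F -> (k <= #|F|)%N).

Definition in_class (n : nat) (g k : nat) (e : rel 'I_n) : Prop :=
  simple_graph e /\ gconnected e /\ gn_connectivity_eq e g k.

Definition min_edges_is (n g k m : nat) : Prop :=
  (exists e : rel 'I_n, @in_class n g k e /\ nedges e = m) /\
  (forall e : rel 'I_n, @in_class n g k e -> (m <= nedges e)%N).

(* Main.v *)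
Require Import Defs.
From mathcomp Require Import all_boot zify.
Set Implicit Arguments. Unset Strict Implicit. Unset Printing Implicit Defensive.

Lemma card_le_list (T : finType) (U : eqType) (S : {set T}) (f : T -> U) (s : seq U) :
  injective f -> (forall x, x \in S -> f x \in s) -> #|S| <= size s.
Proof.
move=> inj H; rewrite cardE -(size_map f); apply: uniq_leq_size.
  by rewrite map_inj_uniq // enum_uniq.
by move=> y /mapP [x]; rewrite mem_enum => /H Hx ->.
Qed.

Lemma card_ge_list n (S : {set 'I_n}) (s : seq nat) :
  uniq s -> (forall w, w \in s -> exists2 x : 'I_n, x \in S & val x = w) -> size s <= #|S|.
Proof.
move=> us H; rewrite cardE -(size_map val); apply: uniq_leq_size => // w /H [x xS <-].
by apply: map_f; rewrite mem_enum.
Qed.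

Lemma closed_conn (T : finType) (r : rel T) (P : pred T) x y :
  (forall u v, r u v -> P u -> P v) -> connect r x y -> P x -> P y.
Proof.
move=> H /connectP [p Hp ->]; elim: p x Hp => //= z p IH x /andP [rxz Hp] Px.
exact: IH Hp (H _ _ rxz Px).
Qed.

Definition cross n (e : rel 'I_n) (p : 'I_n -> 'I_n) :=
  [set q : 'I_n * 'I_n | [&& q.1 < q.2, e q.1 q.2 & p q.1 != p q.2]].

Lemma cluster n (e : rel 'I_n) : symmetric e -> (forall x y, connect e x y) ->
  forall p : 'I_n -> 'I_n, #|p @: setT| - 1 <= #|cross e p|.
Proof.
move=> esym econ.
suff H : forall s p, #|p @: setT| = s -> s - 1 <= #|cross e p| by move=> p; exact: H.
elim=> [|s IH] p Hs; first by [].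
case: (boolP [exists x, exists y, e x y && (p x != p y)]) =>
  [/existsP [x /existsP [y /andP [exy pxy]]] | /existsPn Hn].
- pose p' z := if p z == p y then p x else p z.
  have Himg : p' @: setT = (p @: setT) :\ p y.
    apply/setP => v; rewrite in_setD1; apply/imsetP/andP.
    + case=> z _ ->; rewrite /p'; case: ifP => [_|/negbT H].
        by split => //; apply: imset_f.
      by split => //; apply: imset_f.
    + case=> vy /imsetP [z _ vz]; exists z => //; rewrite /p' -vz (negbTE vy) //.
  have Hs' : #|p' @: setT| = s.
    move: Hs; rewrite Himg (cardsD1 (p y) (p @: setT)) imset_f //=.
    by rewrite add1n => -[].
  have := IH p' Hs'.
  have Hprop : cross e p' \proper cross e p.
    apply/properP; split.
    - apply/subsetP => q; rewrite !inE => /and3P [q12 eq pq]; rewrite q12 eq /=.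
      apply: contra pq => /eqP H; by rewrite /p' H.
    - have xy : x != y by apply: contra pxy => /eqP ->.
      case: (ltngtP x y) => [lxy|lyx|exy']; last first.
        by exfalso; move/negP: xy; apply; apply/eqP/val_inj.
      + exists (y, x); rewrite !inE /= lyx esym exy /=; first by rewrite eq_sym.
        by rewrite /p' eqxx (negbTE pxy) eqxx.
      + exists (x, y); rewrite !inE /= lxy exy /=; first exact: pxy.
        by rewrite /p' eqxx (negbTE pxy) eqxx.
  have := proper_card Hprop. lia.
- have : 0 < #|p @: setT| by rewrite Hs.
  case/card_gt0P => v /imsetP [x0 _ vx0].
  have Hall : forall z, p z = p x0.
    move=> z; apply/eqP; apply: (@closed_conn _ e (fun z => p z == p x0) x0 z) => //.
    move=> u w euw /eqP <-; have := Hn u; move/existsPn/(_ w).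
    by rewrite euw /= negbK eq_sym.
  have : #|p @: setT| <= 1.
    rewrite -(cards1 (p x0)); apply: subset_leq_card; apply/subsetP => w /imsetP [z _ ->].
    by rewrite Hall inE.
  rewrite Hs; case: s {IH Hs} => //.
Qed.

Definition eset n (e : rel 'I_n) := [set q : 'I_n * 'I_n | (q.1 < q.2) && e q.1 q.2].

Lemma LB1 n (e : rel 'I_n) : simple_graph e -> gconnected e -> n - 1 <= nedges e.
Proof.
case=> esym _ econ; have := cluster esym econ id.
rewrite imset_id cardsT card_ord => H; apply: leq_trans H _; apply: subset_leq_card.
by apply/subsetP=> q; rewrite !inE => /and3P [-> -> _].
Qed.

Lemma handshake n (r : rel 'I_n) : symmetric r -> irreflexive r ->
  2 * #|[set q : 'I_n * 'I_n | (q.1 < q.2) && r q.1 q.2]| = \sum_x #|[set y | r x y]|.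
Proof.
move=> rs ri.
have -> : \sum_x #|[set y | r x y]| = #|[set q : 'I_n * 'I_n | r q.1 q.2]|.
  rewrite -sum1_card (eq_bigl (fun q : 'I_n * 'I_n => true && r q.1 q.2)); last first.
    by move=> q; rewrite inE.
  rewrite -(pair_big_dep xpredT (fun i j => r i j) (fun _ _ => 1)).
  by apply: eq_bigr => x _; rewrite -sum1_card; apply: eq_bigl => y; rewrite inE.
rewrite -(cardsID [set q : 'I_n * 'I_n | q.1 < q.2] [set q : 'I_n * 'I_n | r q.1 q.2]).
set L := [set q : 'I_n * 'I_n | (q.1 < q.2) && r q.1 q.2].
have -> : [set q : 'I_n * 'I_n | r q.1 q.2] :&: [set q : 'I_n * 'I_n | q.1 < q.2] = L.
  by apply/setP => q; rewrite !inE andbC.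
have -> : [set q : 'I_n * 'I_n | r q.1 q.2] :\: [set q : 'I_n * 'I_n | q.1 < q.2] =
          (fun q : 'I_n * 'I_n => (q.2, q.1)) @: L.
  apply/setP => -[a b]; rewrite !inE /=; apply/andP/imsetP.
  - case=> nab rab; exists (b, a); rewrite // inE /= rs rab andbT.
    rewrite ltn_neqAle leqNgt nab andbT; apply/negP => /eqP Hab.
    by move: rab; rewrite (val_inj Hab) ri.
  - case=> -[c d]; rewrite inE /= => /andP [cd rcd] [-> ->]; split.
      by rewrite -leqNgt ltnW.
    by rewrite rs.
rewrite card_imset; first by rewrite mul2n addnn.
by move=> [a b] [c d] /= [-> ->].
Qed.

Lemma LB n (e : rel 'I_n) g F : simple_graph e -> gconnected e -> good_neighbor_cut e g F ->
  ((n - #|F|) * g + 1) %/ 2 + #|F| + 1 <= nedges e.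
Proof.
case=> esym eirr econ [Hgood Hdis].
have [x0 [y0 [x0F [y0F nc]]]] : exists x0 y0, x0 \notin F /\ y0 \notin F /\
    ~~ connect (del_rel e F) x0 y0.
  case: (boolP [exists x, exists y, [&& x \notin F, y \notin F & ~~ connect (del_rel e F) x y]]).
  - by move/existsP=> [x /existsP [y /and3P [? ? ?]]]; exists x, y.
  - move/existsPn=> H; exfalso; apply: Hdis => x y xF yF.
    by move: (H x) => /existsPn /(_ y); rewrite xF yF /= negbK.
have drs : symmetric (del_rel e F).
  by move=> u v; rewrite /del_rel /= esym; case: (u \in F); case: (v \in F).
have dri : irreflexive (del_rel e F) by move=> u; rewrite /del_rel /= eirr !andbF.
pose p z := if z \in F then z else if connect (del_rel e F) x0 z then x0 else y0.
have Himg : #|F| + 2 <= #|p @: setT|.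
  have x0y0 : x0 != y0 by apply: contraNneq nc => <-; exact: connect0.
  have -> : #|F| + 2 = #|F :|: [set x0; y0]|.
    rewrite cardsU cards2 x0y0.
    have -> : F :&: [set x0; y0] = set0.
      apply/setP => z; rewrite !inE; case: (boolP (z \in F)) => //= zF.
      by apply/negP => /orP [] /eqP Hz; subst; rewrite zF in x0F y0F.
    by rewrite cards0 subn0.
  apply: subset_leq_card; apply/subsetP => z; rewrite !inE => /orP [zF | /orP [] /eqP ->].
  - by apply/imsetP; exists z => //; rewrite /p zF.
  - by apply/imsetP; exists x0 => //; rewrite /p (negbTE x0F) connect0.
  - by apply/imsetP; exists y0 => //; rewrite /p (negbTE y0F) (negbTE nc).
have Hcr := cluster esym econ p.
set B := [set q : 'I_n * 'I_n | (q.1 \in F) || (q.2 \in F)].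
have Hcross : cross e p \subset eset e :&: B.
  apply/subsetP => q; rewrite !inE => /and3P [q12 eq pq]; rewrite q12 eq /=.
  apply: contraR pq => /norP [q1F q2F]; apply/eqP.
  rewrite /p (negbTE q1F) (negbTE q2F).
  have d12 : del_rel e F q.1 q.2 by rewrite /del_rel /= q1F q2F eq.
  have -> : connect (del_rel e F) x0 q.1 = connect (del_rel e F) x0 q.2 => //.
  apply/idP/idP => H; first exact: connect_trans H (connect1 d12).
  by apply: connect_trans H (connect1 _); rewrite drs.
have Hin : ((n - #|F|) * g + 1) %/ 2 <= #|eset e :\: B|.
  have -> : eset e :\: B = [set q : 'I_n * 'I_n | (q.1 < q.2) && del_rel e F q.1 q.2].
    apply/setP => q; rewrite !inE /del_rel /=.
    by case: (q.1 \in F); case: (q.2 \in F); case: (q.1 < q.2).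
  have Hh := handshake drs dri.
  have Hsum : (n - #|F|) * g <= \sum_x #|[set y | del_rel e F x y]|.
    rewrite (bigID (fun x => x \in F)) /=; apply: leq_trans (leq_addl _ _).
    have -> : (n - #|F|) * g = \sum_(x in ~: F) g.
      by rewrite sum_nat_const [#|~: F|]cardsCs setCK card_ord.
    rewrite [X in X <= _](eq_bigl (fun x => x \notin F)); last by move=> x; rewrite inE.
    apply: leq_sum => x xF; have := Hgood x xF; move/leq_trans; apply.
    by apply: subset_leq_card; apply/subsetP => y; rewrite !inE /del_rel /= xF => /andP [-> ->].
  move: Hh Hsum; set N := (n - #|F|) * g; set X := #|_|; set S := \sum_x _. lia.
rewrite /nedges -/(eset e) -(cardsID B (eset e)).
have := subset_leq_card Hcross. lia.
Qed.


Definition Eg (n k a : nat) (fa fb : nat -> nat -> bool) (x y : nat) : bool :=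
  [|| (x == 0) && [|| y == k, y == k + a | (0 < y) && (y < k)],
      (y == 0) && [|| x == k, x == k + a | (0 < x) && (x < k)],
      [&& k <= x, x < k + a, k <= y, y < k + a & fa (x - k) (y - k)] |
      [&& k + a <= x, x < n, k + a <= y, y < n & fb (x - (k + a)) (y - (k + a))]].

Definition eg (n k a : nat) (fa fb : nat -> nat -> bool) : rel 'I_n :=
  fun x y => Eg n k a fa fb x y.

Definition famOK (m g : nat) (f : nat -> nat -> bool) (E : nat) : Prop :=
  (forall i j, f i j = f j i) /\ (forall i, ~~ f i i) /\
      (forall j, 0 < j < m -> exists2 i, i < j & f i j) /\
      (forall i, i < m -> exists s, [/\ uniq s, g <= size s &
                        forall j, j \in s -> (j < m) && f i j]) /\
      (forall c, 0 < c < m -> exists s, size s < g /\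
                        forall j, j < m -> f c j -> c < j -> j \in s) /\
      (exists s : seq (nat*nat), size s = E /\
                        forall i j, i < j -> j < m -> f i j -> (i, j) \in s).

Lemma card_lt_k n k : k <= n -> #|[set x : 'I_n | x < k]| = k.
Proof.
move=> kn; apply/eqP; rewrite eqn_leq; apply/andP; split.
  rewrite -{2}(size_iota 0 k); apply: card_le_list val_inj _ => x; rewrite inE mem_iota.
  by move=> ->.
rewrite -{1}(size_iota 0 k); apply: card_ge_list; first exact: iota_uniq.
move=> w; rewrite mem_iota add0n => wk.
have wn : w < n by lia.
by exists (Ordinal wn); rewrite // inE.
Qed.


Section Constr.
Variables (n g k a : nat) (fa fb : nat -> nat -> bool) (Ea Eb : nat).
Hypotheses (g1 : 1 <= g) (k1 : 1 <= k) (a1 : 1 <= a) (kan : k + a < n).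
Hypothesis (HA : famOK a g fa Ea) (HB : famOK (n - (k + a)) g fb Eb).

Let E := Eg n k a fa fb.
Let e := @eg n k a fa fb.

Lemma E_sym x y : E x y = E y x.
Proof.
have [Ha1 _] := HA; have [Hb1 _] := HB.
rewrite /E /Eg (Ha1 (x - k)) (Hb1 (x - (k + a))).
set A1 := (x == 0) && _; set A2 := (y == 0) && _.
set A3 := [&& k <= x, _, _, _ & _]; set A4 := [&& k + a <= x, _, _, _ & _].
set B3 := [&& k <= y, _, _, _ & _]; set B4 := [&& k + a <= y, _, _, _ & _].
have -> : A3 = B3 by rewrite /A3 /B3; case: (k <= x); case: (x < k + a); case: (k <= y); case: (y < k + a).
have -> : A4 = B4 by rewrite /A4 /B4; case: (k + a <= x); case: (x < n); case: (k + a <= y); case: (y < n).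
by case: A1; case: A2.
Qed.

Lemma e_sym : symmetric e.
Proof. move=> x y; exact: (E_sym x y). Qed.

Lemma e_irr : irreflexive e.
Proof.
have [_ [Ha2 _]] := HA; have [_ [Hb2 _]] := HB.
move=> x; rewrite /e /eg /Eg (negbTE (Ha2 _)) (negbTE (Hb2 _)) !andbF !orbF.
apply/negbTE/negP => H; lia.
Qed.

Lemma E_pred u : 0 < u < n -> exists2 v, v < u & E v u.
Proof.
have [_ [_ [Ha3 _]]] := HA; have [_ [_ [Hb3 _]]] := HB.
move=> /andP [u0 un].
case: (ltnP u k) => uk.
  by exists 0 => //; rewrite /E /Eg eqxx u0 uk /= !orbT.
case: (ltnP u (k + a)) => uka.
  case: (ltngtP u k) => [|ku|->]; first lia.
    have [i ij fij] : exists2 i, i < u - k & fa i (u - k) by apply: Ha3; lia.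
    exists (k + i); first lia.
    rewrite /E /Eg addKn fij.
    have -> : [&& k <= k + i, k + i < k + a, k <= u, u < k + a & true] by
      apply/and5P; split => //; lia.
    by rewrite !orbT.
  by exists 0 => //; rewrite /E /Eg eqxx /= eqxx.
case: (ltngtP u (k + a)) => [|ku|->]; first lia.
  have [i ij fij] : exists2 i, i < u - (k + a) & fb i (u - (k + a)) by apply: Hb3; lia.
  exists (k + a + i); first lia.
  rewrite /E /Eg addKn fij.
  have -> : [&& k + a <= k + a + i, k + a + i < n, k + a <= u, u < n & true] by
    apply/and5P; split => //; lia.
  by rewrite !orbT.
exists 0; [lia | rewrite /E /Eg; apply/orP; left; lia].
Qed.

Let n0 : 0 < n. Proof. lia. Qed.
Let o0 := Ordinal n0.

Lemma e_conn : gconnected e.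
Proof.
have H : forall u (x : 'I_n), val x = u -> connect e o0 x.
  elim/ltn_ind => u IH x xu.
  case: (posnP u) => [u0|upos].
    by have -> : x = o0 by apply: val_inj; rewrite /= xu u0.
  have Hu : 0 < u < n by rewrite upos -xu ltn_ord.
  have [v vu Evu] := E_pred Hu.
  have vn : v < n by lia.
  apply: connect_trans (IH v vu (Ordinal vn) erefl) (connect1 _).
  by rewrite /e /eg /= xu.
move=> x y; apply: (@connect_trans _ e o0 x y); last exact: H _ y erefl.
by rewrite (sym_connect_sym e_sym); exact: H _ x erefl.
Qed.

Let F0 := [set x : 'I_n | x < k].

Lemma F0_good : good_neighbor_faulty e g F0.
Proof.
have [_ [_ [_ [Ha4 _]]]] := HA; have [_ [_ [_ [Hb4 _]]]] := HB.
move=> v; rewrite inE -leqNgt => kv; have vn := ltn_ord v.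
case: (ltnP v (k + a)) => vka.
- have [s [us gs Hs]] := Ha4 (v - k) ltac:(lia).
  apply: leq_trans gs _; rewrite -(size_map (addn k)); apply: card_ge_list.
    by rewrite map_inj_uniq //; exact: addnI.
  move=> w /mapP [j js ->]; have /andP [ja fj] := Hs j js.
  have wn : k + j < n by lia.
  exists (Ordinal wn) => //; rewrite !inE /e /eg /= -leqNgt leq_addr andbT.
  rewrite /Eg addKn fj.
  have -> : [&& k <= v, v < k + a, k <= k + j, k + j < k + a & true] by
    apply/and5P; split => //; lia.
  by rewrite !orbT.
- have [s [us gs Hs]] := Hb4 (v - (k + a)) ltac:(lia).
  apply: leq_trans gs _; rewrite -(size_map (addn (k + a))); apply: card_ge_list.
    by rewrite map_inj_uniq //; exact: addnI.
  move=> w /mapP [j js ->]; have /andP [ja fj] := Hs j js.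
  have wn : k + a + j < n by lia.
  exists (Ordinal wn) => //; rewrite !inE /e /eg /=.
  have -> : ~~ (k + a + j < k) by lia.
  rewrite andbT /Eg addKn fj.
  have -> : [&& k + a <= v, v < n, k + a <= k + a + j, k + a + j < n & true] by
    apply/and5P; split => //; lia.
  by rewrite !orbT.
Qed.

Lemma F0_disc : ~ del_connected e F0.
Proof.
move=> H.
have kn : k < n by lia.
have Hc := H (Ordinal kn) (Ordinal kan) ltac:(by rewrite inE ltnn) ltac:(by rewrite inE /=; lia).
have Hcl : forall u v : 'I_n, del_rel e F0 u v ->
    (k <= u) && (u < k + a) -> (k <= v) && (v < k + a).
  move=> u v; rewrite /del_rel /= /F0 !inE /e /eg /Eg => H1 H2; have := ltn_ord u; have := ltn_ord v; lia.
have := closed_conn Hcl Hc; rewrite /= => Himp; have := Himp ltac:(apply/andP; split; lia); lia.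
Qed.

Lemma del_sym F : symmetric (del_rel e F).
Proof.
by move=> u v; rewrite /del_rel /= e_sym; case: (u \in F); case: (v \in F).
Qed.

Lemma F0_min F : good_neighbor_cut e g F -> k <= #|F|.
Proof.
case=> Hgood Hdis.
have [_ [Ha2 [_ [_ [Ha5 _]]]]] := HA; have [_ [Hb2 [_ [_ [Hb5 _]]]]] := HB.
have drs := del_sym F.
have o0F : o0 \in F.
  apply/negPn/negP => o0F; apply: Hdis.
  suff Hc : forall u (x : 'I_n), val x = u -> x \notin F -> connect (del_rel e F) o0 x.
    move=> x y xF yF; apply: (@connect_trans _ _ o0).
      by rewrite (sym_connect_sym drs); exact: Hc _ x erefl xF.
    exact: Hc _ y erefl yF.
  elim/ltn_ind => u IH x xu xF; have xn : u < n by rewrite -xu ltn_ord.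
  have edge0 : E 0 u -> connect (del_rel e F) o0 x.
    move=> E0u; apply: connect1; rewrite /del_rel /= o0F xF /e /eg /= xu; exact: E0u.
  case: (posnP u) => [u0 | upos].
    by have -> : x = o0 by apply: val_inj; rewrite /= xu u0.
  case: (ltnP u k) => uk.
    by apply: edge0; rewrite /E /Eg; apply/orP; left; lia.
  case: (ltnP u (k + a)) => uka.
    case: (ltngtP u k) => [|ku|uk']; first lia; last first.
      by apply: edge0; rewrite uk' /E /Eg; apply/orP; left; lia.
    apply/idPn => nc.
    have [s [ss Hs]] := Ha5 (u - k) ltac:(lia).
    have := Hgood x xF; apply/negP; rewrite -ltnNge.
    apply: leq_ltn_trans ss; rewrite -(size_map (addn k)).
    apply: card_le_list val_inj _ => v; rewrite !inE => /andP [exv vF]; have vn' := ltn_ord v.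
    have Hv : [&& k <= v, v < k + a & fa (u - k) (v - k)].
      move: exv; rewrite /e /eg /Eg xu => H; lia.
    move/and3P: Hv => [kv vka fuv].
    have vu : u < v.
      rewrite ltnNge; apply/negP => vu.
      have vne : val v != u.
        by apply/negP => /eqP vu'; move: fuv; rewrite vu' (negbTE (Ha2 _)).
      have vlt : v < u by rewrite ltn_neqAle vne vu.
      move/negP: nc; apply; apply: connect_trans (IH v vlt v erefl vF) (connect1 _).
      by rewrite /del_rel /= vF xF /= e_sym.
    have Hm := Hs (v - k) ltac:(lia) fuv ltac:(lia).
    by apply/mapP; exists (v - k) => //; rewrite /= subnKC.
  case: (ltngtP u (k + a)) => [|ku|uk']; first lia; last first.
    by apply: edge0; rewrite uk' /E /Eg; apply/orP; left; lia.
  apply/idPn => nc.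
  have [s [ss Hs]] := Hb5 (u - (k + a)) ltac:(lia).
  have := Hgood x xF; apply/negP; rewrite -ltnNge.
  apply: leq_ltn_trans ss; rewrite -(size_map (addn (k + a))).
  apply: card_le_list val_inj _ => v; rewrite !inE => /andP [exv vF]; have vn' := ltn_ord v.
  have Hv : [&& k + a <= v, v < n & fb (u - (k + a)) (v - (k + a))].
    move: exv; rewrite /e /eg /Eg xu => H; lia.
  move/and3P: Hv => [kv vn fuv].
  have vu : u < v.
    rewrite ltnNge; apply/negP => vu.
    have vne : val v != u.
      by apply/negP => /eqP vu'; move: fuv; rewrite vu' (negbTE (Hb2 _)).
    have vlt : v < u by rewrite ltn_neqAle vne vu.
    move/negP: nc; apply; apply: connect_trans (IH v vlt v erefl vF) (connect1 _).
    by rewrite /del_rel /= vF xF /= e_sym.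
  have Hm := Hs (v - (k + a)) ltac:(lia) fuv ltac:(lia).
  by apply/mapP; exists (v - (k + a)) => //; rewrite /= subnKC.
have pend : forall x : 'I_n, 0 < x < k -> x \in F.
  move=> x /andP [x0 xk]; apply/negPn/negP => xF.
  have := Hgood x xF; apply/negP; rewrite -ltnNge.
  apply: (leq_trans _ g1); rewrite ltnS.
  apply: (@card_le_list _ _ _ val [::] val_inj) => v; rewrite !inE => /andP [exv vF]; have vn' := ltn_ord v.
  have v0 : nat_of_ord v = 0 by move: exv; rewrite /e /eg /Eg => H; lia.
  have vo : v = o0 by apply: val_inj.
  by rewrite vo o0F in vF.
have : [set x : 'I_n | x < k] \subset F.
  apply/subsetP => x; rewrite inE => xk; case: (posnP x) => x0.
    by have -> : x = o0 by apply: val_inj.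
  by apply: pend; rewrite x0 xk.
move/subset_leq_card; rewrite card_lt_k //; lia.
Qed.

Lemma e_nedges : nedges e <= k + 1 + Ea + Eb.
Proof.
have [_ [_ [_ [_ [_ [sa [sza Ha6]]]]]]] := HA.
have [_ [_ [_ [_ [_ [sb [szb Hb6]]]]]]] := HB.
set GL := [:: (0,k); (0,k+a)] ++ [seq (0, j) | j <- iota 1 (k-1)] ++
          [seq (p.1 + k, p.2 + k) | p <- sa] ++ [seq (p.1 + (k+a), p.2 + (k+a)) | p <- sb].
have -> : k + 1 + Ea + Eb = size GL.
  by rewrite /GL !size_cat !size_map size_iota sza szb /=; lia.
apply: (@card_le_list _ _ _ (fun q : 'I_n * 'I_n => (val q.1, val q.2))).
  by move=> [x1 y1] [x2 y2] /= [/val_inj -> /val_inj ->].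
move=> [x y]; rewrite inE /= => /andP [xy]; rewrite /e /eg /Eg => /or4P [H|H|H|H].
- case/andP: H => /eqP x0 /or3P [/eqP yk|/eqP yk|Hy].
  + by rewrite /GL mem_cat inE x0 yk eqxx.
  + by rewrite /GL mem_cat !inE x0 yk eqxx orbT.
  + rewrite /GL !mem_cat; apply/orP; right; apply/orP; left.
    by apply/mapP; exists (nat_of_ord y); rewrite ?x0 // mem_iota; lia.
- lia.
- case/and5P: H => kx xka ky yka fxy.
  have Hm := Ha6 (x - k) (y - k) ltac:(lia) ltac:(lia) fxy.
  rewrite /GL !mem_cat; apply/orP; right; apply/orP; right; apply/orP; left.
  by apply/mapP; exists (x - k, y - k) => //=; rewrite !subnK.
- case/and5P: H => kx xka ky yka fxy.
  have Hm := Hb6 (x - (k + a)) (y - (k + a)) ltac:(lia) ltac:(lia) fxy.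
  rewrite /GL !mem_cat; apply/orP; right; apply/orP; right; apply/orP; right.
  by apply/mapP; exists (x - (k + a), y - (k + a)) => //=; rewrite !subnK.
Qed.

Lemma construct : in_class g k e /\ nedges e <= k + 1 + Ea + Eb.
Proof.
split; last exact: e_nedges.
split; first by split; [exact: e_sym | exact: e_irr].
split; first exact: e_conn.
split; last exact: F0_min.
exists F0; split; first by split; [exact: F0_good | exact: F0_disc].
apply: card_lt_k; lia.
Qed.

End Constr.


Definition star (i j : nat) : bool := (i != j) && ((i == 0) || (j == 0)).

Lemma star_ok m : 2 <= m -> famOK m 1 star (m - 1).
Proof.
move=> m2; split; first by move=> i j; rewrite /star eq_sym orbC.
split; first by move=> i; rewrite /star eqxx.
split; first by move=> j /andP [j0 jm]; exists 0 => //; rewrite /star eqxx /=; lia.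
split.
  move=> i im; case: (posnP i) => [->|i0].
    by exists [:: 1]; split => // j; rewrite inE => /eqP ->; rewrite /star /=; lia.
  by exists [:: 0]; split => // j; rewrite inE => /eqP ->; rewrite /star /=; lia.
split.
  by move=> c /andP [c0 cm]; exists [::]; split => // j jm; rewrite /star; lia.
exists [seq (0, j) | j <- iota 1 (m - 1)]; split; first by rewrite size_map size_iota.
move=> i j ij jm; rewrite /star => H.
have -> : i = 0 by lia.
by apply/mapP; exists j => //; rewrite mem_iota; lia.
Qed.

Section Circ.
Variables (m h r : nat).
Hypotheses (h1 : 1 <= h) (r1 : r <= 1) (mh : 2 * h + r + 1 <= m).

Definition MM := (m + 1) %/ 2.
Definition nb (i t : nat) := if i + t < m then i + t else i + t - m.
Definition off (i j : nat) := if i <= j then j - i else m + j - i.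
Definition Q (i t : nat) : bool :=
  [|| (1 <= t) && (t <= h), (m - h <= t) && (t < m) |
   (r == 1) && (((i < MM) && (t == MM)) || (((MM <= i) || (i == 0)) && (t == m - MM)))].
Definition circ (i j : nat) : bool :=
  [&& i < m, j < m, i != j & Q i (off i j) || Q j (off j i)].
Definition sM (i : nat) := if i < MM then MM else m - MM.
Definition Off (i : nat) : seq nat :=
  iota 1 h ++ iota (m - h) h ++ (if r == 1 then [:: sM i] else [::]).

Lemma sM_range i : r = 1 -> h < sM i < m - h.
Proof. move=> r_1; rewrite /sM /MM; case: ifP => _; lia. Qed.

Lemma Q_sym i j : i < m -> j < m -> i != j -> Q j (off j i) -> Q i (off i j).
Proof.
move=> im jm ij; rewrite /Q /off.
have : (MM + MM = m + 1) \/ (MM + MM = m) by rewrite /MM; lia.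
move: MM => M HM; case: (leqP i j) => H1; case: (leqP j i) => H2 H; lia.
Qed.

Lemma nb_off i j : i < m -> j < m -> nb i (off i j) = j.
Proof. by move=> im jm; rewrite /nb /off; case: (leqP i j) => H1; case: ifP => H2; lia. Qed.

Lemma off_nb i t : i < m -> t < m -> off i (nb i t) = t.
Proof. by move=> im tm; rewrite /nb /off; case: (ltnP (i + t) m) => H1; case: ifP => H2; lia. Qed.

Lemma nb_lt i t : i < m -> t < m -> nb i t < m.
Proof. by move=> im tm; rewrite /nb; case: ifP => H1; lia. Qed.

Lemma off_lt i j : i < m -> j < m -> off i j < m.
Proof. by move=> im jm; rewrite /off; case: ifP => H1; lia. Qed.

Lemma circ_iff i j : i < m -> j < m -> circ i j = Q i (off i j).
Proof.
move=> im jm; rewrite /circ im jm /=; apply/idP/idP.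
  by case/andP => ij /orP [//|]; apply: Q_sym.
move=> H; have ij : i != j.
  by apply/negP => /eqP eij; move: H; rewrite -eij /off leqnn subnn /Q /MM; lia.
by rewrite ij H.
Qed.

Lemma Off_uniq i : uniq (Off i).
Proof.
rewrite /Off !cat_uniq !iota_uniq /=; case: (r =P 1) => /= [r_1|rn]; rewrite ?andbT.
- have Hs := sM_range i r_1.
  apply/andP; split.
  + apply/hasPn => x; rewrite mem_cat !inE !mem_iota => /orP [|/eqP ->]; lia.
  + rewrite orbF mem_iota; lia.
- apply/hasPn => x; rewrite ?cats0 !mem_iota; lia.
Qed.

Lemma Off_size i : size (Off i) = 2 * h + r.
Proof.
rewrite /Off !size_cat !size_iota; case: (r =P 1) => [r_1|rn] /=; lia.
Qed.

Lemma Off_in i t : t \in Off i -> (t < m) && Q i t.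
Proof.
rewrite /Off !mem_cat !mem_iota /Q /sM /MM.
case: (boolP (r == 1)) => [/eqP r_1|rn] /=; rewrite ?inE ?in_nil ?orbF; try (case: ifP => Hi); lia.
Qed.

Lemma Off_all i t : 0 < i < m -> t < m -> Q i t -> t \in Off i.
Proof.
rewrite /Off !mem_cat !mem_iota /Q /sM /MM.
case: (boolP (r == 1)) => [/eqP r_1|rn] /=; rewrite ?inE ?in_nil ?orbF; try (case: ifP => Hi); lia.
Qed.

Lemma Off_last i : m - 1 \in Off i.
Proof. by rewrite /Off !mem_cat !mem_iota; lia. Qed.

Lemma EL_case i j : i < j -> j < m -> Q i (off i j) -> Q j (off j i) ->
  [|| (1 <= off i j) && (off i j <= h), (1 <= off j i) && (off j i <= h),
      [&& r == 1, i < MM & off i j == MM] | [&& r == 1, j < MM & off j i == MM]].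
Proof.
move=> ij jm; rewrite /off (ltnW ij) leqNgt ij /= /Q /MM => H1 H2; lia.
Qed.

Definition EL : seq (nat * nat) :=
  [seq (minn i (nb i t), maxn i (nb i t)) | i <- iota 0 m, t <- iota 1 h] ++
  (if r == 1 then [seq (minn i (nb i MM), maxn i (nb i MM)) | i <- iota 0 MM] else [::]).

Lemma circ_ok : famOK m (2 * h + r) circ (m * h + r * MM).
Proof.
split; first by move=> i j; rewrite /circ eq_sym orbC; case: (i < m); case: (j < m).
split; first by move=> i; rewrite /circ eqxx !andbF.
split.
  move=> j /andP [j0 jm]; exists j.-1; first lia.
  rewrite circ_iff; try lia.
  have -> : off j.-1 j = 1 by rewrite /off; case: ifP; lia.
  by rewrite /Q; lia.
split.
  move=> i im; exists (map (nb i) (Off i)); split.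
  - rewrite map_inj_in_uniq ?Off_uniq // => t1 t2 H1 H2 E.
    have /andP [t1m _] := Off_in H1; have /andP [t2m _] := Off_in H2.
    by rewrite -(off_nb im t1m) E off_nb.
  - by rewrite size_map Off_size.
  - move=> j /mapP [t Ht ->]; have /andP [tm Qt] := Off_in Ht.
    by rewrite nb_lt // circ_iff ?nb_lt // off_nb.
split.
  move=> c /andP [c0 cm]; exists (map (nb c) (rem (m - 1) (Off c))); split.
    rewrite size_map size_rem ?Off_last // Off_size; lia.
  move=> j jm; rewrite circ_iff // => Qc cj.
  apply/mapP; exists (off c j); last by rewrite nb_off.
  rewrite (mem_rem_uniq _ (Off_uniq c)) inE; apply/andP; split.
    apply/negP => /eqP Ho; have := nb_off cm jm; rewrite Ho /nb; case: ifP; lia.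
  by apply: Off_all => //; [lia | exact: off_lt].
exists EL; split.
  rewrite /EL size_cat size_allpairs !size_iota.
  case: (boolP (r == 1)) => [/eqP r_1|rn] /=.
    by rewrite size_map size_iota r_1 mul1n.
  by have -> : r = 0 by lia.
move=> i j ij jm; have im : i < m by lia.
rewrite circ_iff // => Qi.
have Qj : Q j (off j i) by apply: (Q_sym jm im _ Qi); lia.
have jin : nb i (off i j) = j := nb_off im jm.
have iin : nb j (off j i) = i := nb_off jm im.
rewrite /EL mem_cat.
case/or4P: (EL_case ij jm Qi Qj) => [H|H|H|H].
- apply/orP; left; apply/allpairsP; exists (i, off i j) => /=.
  by rewrite !mem_iota jin; split; [lia | lia | congr pair; lia].
- apply/orP; left; apply/allpairsP; exists (j, off j i) => /=.
  by rewrite !mem_iota iin; split; [lia | lia | congr pair; lia].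
- case/and3P: H => /eqP r_1 iM /eqP oM; apply/orP; right; rewrite r_1 /=.
  by apply/mapP; exists i; rewrite ?mem_iota -?oM ?jin //; [lia | congr pair; lia].
- case/and3P: H => /eqP r_1 jM /eqP oM; apply/orP; right; rewrite r_1 /=.
  by apply/mapP; exists j; rewrite ?mem_iota -?oM ?iin //; [lia | congr pair; lia].
Qed.

End Circ.


Lemma arith g h r a b : r <= 1 -> g = 2 * h + r -> a = g + 1 ->
  a * h + r * ((a + 1) %/ 2) + (b * h + r * ((b + 1) %/ 2)) <= ((a + b) * g + 1) %/ 2.
Proof. move=> r1 -> ->; case: r r1 => [|[|//]] _; lia. Qed.

Lemma finish n g k m (e : rel 'I_n) : in_class g k e -> nedges e <= m ->
  (forall e' : rel 'I_n, in_class g k e' -> m <= nedges e') -> min_edges_is n g k m.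
Proof.
move=> Hin Hle Hlb; split; last exact: Hlb.
by exists e; split => //; apply/eqP; rewrite eqn_leq Hle Hlb.
Qed.

Lemma class_LB n g k (e : rel 'I_n) : in_class g k e ->
  ((n - k) * g + 1) %/ 2 + k + 1 <= nedges e.
Proof. by case=> Hs [Hc [[F [HF cF]] _]]; rewrite -cF; exact: LB Hs Hc HF. Qed.

Theorem theorem4p1 (n g k : nat) :
  (1 <= g)%N -> (g <= (n - k - 2) %/ 2)%N ->
  (1 <= k)%N -> (k <= n - 2 * g - 2)%N ->
  (g = 1 -> min_edges_is n g k (n - 1)) /\
  (~~ odd (n - k) -> (2 <= g)%N ->
     min_edges_is n g k ((n - k) * g %/ 2 + k + 1)) /\
  (odd (n - k) -> (2 <= g)%N ->
     min_edges_is n g k (((n - k) * g + 1) %/ 2 + k + 1)).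
Proof.
move=> g1 gle k1 kle.
have Hnk : 2 * g + 2 <= n - k by lia.
have Hgen : 2 <= g -> forall m, ((n - k) * g + 1) %/ 2 + k + 1 = m -> min_edges_is n g k m.
  move=> g2 m <-.
  pose h := g %/ 2; pose r := g %% 2.
  have gE : g = 2 * h + r by rewrite /h /r; lia.
  have r1 : r <= 1 by rewrite /r; lia.
  have h1 : 1 <= h by rewrite /h; lia.
  have HA := @circ_ok (g + 1) h r h1 r1 ltac:(lia).
  have HB := @circ_ok (n - (k + (g + 1))) h r h1 r1 ltac:(lia).
  rewrite -gE in HA HB.
  have [Hin Hne] := construct g1 k1 (ltac:(lia) : 1 <= g + 1) (ltac:(lia) : k + (g + 1) < n) HA HB.
  apply: finish Hin _ _; last by move=> e' He'; exact: class_LB He'.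
  apply: leq_trans Hne _; rewrite /MM.
  have := @arith g h r (g + 1) (n - (k + (g + 1))) r1 gE erefl.
  have -> : g + 1 + (n - (k + (g + 1))) = n - k by lia.
  lia.
split; [|split].
- move=> g_1; subst g.
  have [Hin Hne] := construct (ltac:(lia) : 1 <= 1) k1 (ltac:(lia) : 1 <= 2)
     (ltac:(lia) : k + 2 < n) (@star_ok 2 (leqnn 2)) (@star_ok (n - (k + 2)) ltac:(lia)).
  apply: finish Hin _ _; first by apply: leq_trans Hne _; lia.
  by move=> e' [Hs [Hc _]]; exact: LB1.
- move=> ev g2; apply: Hgen => //.
  have : ~~ odd ((n - k) * g) by rewrite oddM negb_and ev.
  move=> Hodd; have : ((n - k) * g) %% 2 = 0 by rewrite modn2 (negbTE Hodd).
  set P := (n - k) * g; lia.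
- by move=> od g2; apply: Hgen.
Qed.
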